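(* Let $X$ and $Y$ be Alexandroff spaces satisfying: (i) there is a bijection $b:\{S(x):x\in X\}\to\{S(y):y\in Y\}$; (ii) for each $x\in X$ there is a homeomorphism $f_x:S(x)\to b(S(x))$ (subspace topologies); (iii) for all $x_1,x_2\in X$, if $S(x_1)\cap S(x_2)\neq\emptyset$ then $f_{x_1}(S(x_1)\cap S(x_2))=f_{x_2}(S(x_1)\cap S(x_2))$. Then $X$ and $Y$ are homeomorphic.
   Context: A topological space $X$ is an Alexandroff space if arbitrary intersections of open sets are open. In an Alexandroff space, $S(x)$ denotes the minimal open neighborhood of $x$, i.e. the intersection of all open sets containing $x$, which is open. *)

(* Defs.v *)
From HB Require Import structures.
From mathcomp Require Import all_boot all_order all_algebra.
From mathcomp Require Import all_classical all_reals all_analysis.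
Set Implicit Arguments. Unset Strict Implicit. Unset Printing Implicit Defensive.
Local Open Scope classical_set_scope.

Definition alexandroff (T : topologicalType) : Prop :=
  forall (F : set (set T)), (forall U, F U -> open U) -> open (\bigcap_(U in F) U).

Definition minnbhs (T : topologicalType) (x : T) : set T :=
  \bigcap_(U in [set U : set T | open U /\ U x]) U.

Definition homeo_on (T U : topologicalType) (A : set T) (B : set U)
  (f : T -> U) : Prop :=
  exists g : U -> T,
    (forall a, A a -> B (f a)) /\
    (forall b, B b -> A (g b)) /\
    (forall a, A a -> g (f a) = a) /\
    (forall b, B b -> f (g b) = b) /\
    {within A, continuous f} /\
    {within B, continuous g}.

Definition homeomorphic (T U : topologicalType) : Prop :=
  exists (f : T -> U) (g : U -> T),
    [/\ cancel f g, cancel g f, continuous f & continuous g].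

(* Main.v *)
Require Import Defs.
From mathcomp Require Import all_boot all_order all_algebra.
From mathcomp Require Import all_classical all_reals all_analysis.
Local Open Scope classical_set_scope.

Set Implicit Arguments.
Section L.

Variable (T U : topologicalType).

Lemma S_self (z : T) : minnbhs z z.
Proof. by move=> V [_ ]. Qed.

Lemma S_open (alex : alexandroff T) (z : T) : open (minnbhs z).
Proof. by apply: alex => V []. Qed.

Lemma S_sub_open (z : T) (V : set T) : open V -> V z -> minnbhs z `<=` V.
Proof. by move=> oV Vz w; apply. Qed.

Lemma S_trans (alex : alexandroff T) (z w : T) : minnbhs z w -> minnbhs w `<=` minnbhs z.
Proof. by move=> zw; apply: S_sub_open => //; apply: S_open. Qed.

Lemma S_nbhs (z : T) (V : set T) : nbhs z V -> minnbhs z `<=` V.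
Proof. rewrite nbhsE => -[B [oB Bz] BV] w Sw; apply: BV; exact: Sw. Qed.

Lemma mono_within (A : set T) (h : T -> U) : {within A, continuous h} ->
  forall a w, A a -> A w -> minnbhs a w -> minnbhs (h a) (h w).
Proof.
move=> hc a w Aa Aw Saw V [oV Vha].
have := hc a V (open_nbhs_nbhs (conj oV Vha)).
move=> H.
have H' : nbhs_subspace (a : subspace A) (h @^-1` V) := H.
rewrite -(nbhs_subspace_in Aa) in H'.
by have := @S_nbhs a _ H' w Saw; apply.
Qed.

Lemma cont_mono (alex : alexandroff T) (F : T -> U) :
  (forall z z', minnbhs z z' -> minnbhs (F z) (F z')) -> continuous F.
Proof.
move=> mono; apply/continuousP => V oV; rewrite openE => z Vz.
rewrite /interior; apply: (@filterS _ _ _ (minnbhs z)); last first.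
  by apply: open_nbhs_nbhs; split; [exact: S_open | exact: S_self].
move=> w Szw; exact: (mono z w Szw V (conj oV Vz)).
Qed.
End L.
Unset Implicit Arguments.

Theorem theorem13 (X Y : topologicalType)
  (alexX : alexandroff X) (alexY : alexandroff Y)
  (b : set X -> set Y)
  (b_into : forall x : X, exists y : Y, b (minnbhs x) = minnbhs y)
  (b_inj : forall x1 x2 : X, b (minnbhs x1) = b (minnbhs x2) ->
                             minnbhs x1 = minnbhs x2)
  (b_onto : forall y : Y, exists x : X, b (minnbhs x) = minnbhs y)
  (f : X -> X -> Y)
  (f_homeo : forall x : X, homeo_on (minnbhs x) (b (minnbhs x)) (f x))
  (f_compat : forall x1 x2 : X, minnbhs x1 `&` minnbhs x2 !=set0 ->
     f x1 @` (minnbhs x1 `&` minnbhs x2) = f x2 @` (minnbhs x1 `&` minnbhs x2)) :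
  homeomorphic X Y.
Proof.
have /choice [gg Hg] := f_homeo.
have /choice [pick Hpick] := b_onto.
have /choice [c Hc] : forall A : set X, exists o : option X,
    forall z, A = minnbhs z -> exists x, o = Some x /\ minnbhs x = A.
  move=> A; case: (pselect (exists z, A = minnbhs z)) => [[z ->]|N].
    by exists (Some z) => z' _; exists z.
  by exists None => z E; exfalso; apply: N; exists z.
pose rr z := odflt z (c (minnbhs z)).
have rrS z : minnbhs (rr z) = minnbhs z.
  by have [x [E1 E2]] := Hc _ z erefl; rewrite /rr E1.
have rr_eq z1 z2 : minnbhs z1 = minnbhs z2 -> rr z1 = rr z2.
  move=> E; have [x [E1 E2]] := Hc _ z1 erefl.
  by rewrite /rr -E E1.
have Bopen x : open (b (minnbhs x)).
  by have [y ->] := b_into x; exact: S_open.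
have Cl x w : minnbhs x w -> f x @` minnbhs w = b (minnbhs w).
  move=> Sxw.
  have sub : minnbhs w `<=` minnbhs x by exact: S_trans.
  have ne : minnbhs x `&` minnbhs w !=set0 by exists w; split => //; exact: S_self.
  have := f_compat x w ne; rewrite setIidr // => ->.
  have [H1 [H2 [H3 [H4 _]]]] := Hg w.
  rewrite eqEsubset; split; first by move=> _ [u Su <-]; exact: H1.
  by move=> y By; exists (gg w y); [exact: H2 | exact: H4].
have Bl x w : minnbhs x w -> minnbhs (f x w) = f x @` minnbhs w.
  move=> Sxw.
  have [H1 [H2 [H3 [H4 [H5 H6]]]]] := Hg x.
  have sub : minnbhs w `<=` minnbhs x by exact: S_trans.
  rewrite eqEsubset; split.
    move=> v Sv.
    have Bfw : b (minnbhs x) (f x w) by exact: H1.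
    have Bv : b (minnbhs x) v by exact: (@S_sub_open _ (f x w) _ (Bopen x) Bfw v Sv).
    have := mono_within H6 Bfw Bv Sv; rewrite H3 // => Sg.
    by exists (gg x v) => //; exact: H4.
  move=> _ [u Su <-].
  by apply: (mono_within H5) => //; exact: sub.
pose F z := f (rr z) z.
pose G y := gg (rr (pick y)) y.
have Srrz z : minnbhs (rr z) z by rewrite rrS; exact: S_self.
have SF z : minnbhs (F z) = b (minnbhs z).
  by rewrite /F Bl // Cl.
have FG y : F (G y) = y.
  have [H1 [H2 [H3 [H4 _]]]] := Hg (rr (pick y)).
  set r := rr (pick y).
  have By : b (minnbhs r) y by rewrite rrS Hpick; exact: S_self.
  have Sw : minnbhs r (G y) by exact: H2.
  have E : minnbhs (G y) = minnbhs r.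
    apply: b_inj; rewrite -(Cl r (G y) Sw) -(Bl r (G y) Sw) H4 //.
    by rewrite rrS Hpick.
  have E2 : rr (G y) = r.
    by rewrite /r (rr_eq _ _ E) (rr_eq r (pick y)) // rrS.
  rewrite /F E2; exact: H4.
have GF z : G (F z) = z.
  have E : rr (pick (F z)) = rr z.
    by apply: rr_eq; apply: b_inj; rewrite Hpick SF.
  rewrite /G E; have [_ [_ [H3 _]]] := Hg (rr z); exact: H3.
have refl z z' : minnbhs (F z) (F z') -> minnbhs z z'.
  rewrite SF -(Cl (rr z)) // => -[u Su Eu].
  have Sru : minnbhs (rr z) u by rewrite rrS.
  have E : b (minnbhs u) = b (minnbhs z').
    by rewrite -(Cl (rr z) u Sru) -(Bl (rr z) u Sru) Eu SF.
  move/b_inj: E => E.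
  apply: (S_trans alexX Su); rewrite E; exact: S_self.
exists F, G; split => //.
  apply: cont_mono => // z z' Szz'.
  rewrite SF -(Cl (rr z)) //.
  have Srz' : minnbhs (rr z) z' by rewrite rrS.
  have : minnbhs (F z') (F z') by exact: S_self.
  rewrite SF -(Cl (rr z)) // => -[u Su <-].
  by exists u => //; exact: (S_trans alexX Szz').
apply: cont_mono => // y y' Syy'.
by apply: refl; rewrite !FG.
Qed.
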